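(* Assume the approximate realizability assumption holds with $\epsilon_1=0$, i.e. for every $\pi\in\Pi$, $$\min_{f\in\mathcal F}\max_{\pi'\in\Pi}\Vert f-\mathcal T_r^\pi f\Vert_{2,d^{\pi'}}^2\le 0\quad\text{and}\quad \min_{g\in\mathcal G}\max_{\pi'\in\Pi}\Vert g-\mathcal T_c^\pi g\Vert_{2,d^{\pi'}}^2\le 0,$$ and assume the behavior policy satisfies $\mu\in\Pi$. Fix any $\beta\ge 0$ and $\lambda>0$. For each $\pi\in\Pi$ let $$f_r^\pi\in\arg\min_{f\in\mathcal F}\big[\mathcal L_\mu(\pi,f)+\beta\,\mathcal E_\mu(\pi,f)\big],\qquad f_c^\pi\in\arg\min_{g\in\mathcal G}\big[-\lambda\,\mathcal L_\mu(\pi,g)+\beta\,\hat{\mathcal E}_\mu(\pi,g)\big],$$ and let $$\hat\pi^*\in\arg\max_{\pi\in\Pi}\Big[\mathcal L_\mu(\pi,f_r^\pi)-\lambda\{\mathcal L_\mu(\pi,f_c^\pi)\}_+\Big]$$ (these optimizers being assumed to exist). Then $J_r(\hat\pi^* )\ge J_r(\mu)$ and $\{J_c(\hat\pi^* )\}_+\le\{J_c(\mu)\}_++\frac{1}{\lambda}$.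
   Context: Constrained MDP $(\mathcal S,\mathcal A,\mathcal P,R,C,\gamma,\rho)$: state space $\mathcal S$ (possibly infinite), finite action set $\mathcal A$, transition kernel $\mathcal P:\mathcal S\times\mathcal A\to\Delta(\mathcal S)$, reward $R:\mathcal S\times\mathcal A\to[0,1]$, cost $C:\mathcal S\times\mathcal A\to[-1,1]$, discount $\gamma\in[0,1)$, initial state distribution $\rho$. Let $V_{\max}=1/(1-\gamma)$. For a stationary policy $\pi:\mathcal S\to\Delta(\mathcal A)$, $Q_r^\pi(s,a)=\mathbb E[\sum_{t\ge0}\gamma^t R(s_t,a_t)\mid s_0=s,a_0=a,\ a_t\sim\pi(\cdot|s_t),\ s_{t+1}\sim\mathcal P(\cdot|s_t,a_t)]$, $Q_c^\pi$ likewise with $C$; $V_\diamond^\pi(s)=\sum_a\pi(a|s)Q_\diamond^\pi(s,a)$; $J_r(\pi)=(1-\gamma)\mathbb E_{s\sim\rho}[V_r^\pi(s)]$, $J_c(\pi)=(1-\gamma)\mathbb E_{s\sim\rho}[V_c^\pi(s)]$. The discounted occupancy is $d^\pi(s,a)=(1-\gamma)\mathbb E[\sum_{t\ge0}\gamma^t\mathbb 1(s_t=s,a_t=a)]$ with $s_0\sim\rho$, $a_t\sim\pi(\cdot|s_t)$. For $f:\mathcal S\times\mathcal A\to\mathbb R$ and a policy $\pi$, $f(s,\pi):=\sum_a\pi(a|s)f(s,a)$. Bellman operators: $(\mathcal T_r^\pi f)(s,a)=R(s,a)+\gamma\mathbb E_{s'\sim\mathcal P(\cdot|s,a)}[f(s',\pi)]$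 and $(\mathcal T_c^\pi f)(s,a)=C(s,a)+\gamma\mathbb E_{s'\sim\mathcal P(\cdot|s,a)}[f(s',\pi)]$. $\Vert g\Vert_{2,\nu}=\sqrt{\mathbb E_{\nu}[g^2]}$, and $\{x\}_+=\max\{x,0\}$. Function classes: a policy class $\Pi$; $\mathcal F\subseteq\{f:\mathcal S\times\mathcal A\to[0,V_{\max}]\}$; $\mathcal G\subseteq\{g:\mathcal S\times\mathcal A\to[-V_{\max},V_{\max}]\}$; $\mathcal W\subseteq\{w:\mathcal S\times\mathcal A\to[0,B_w]\}$ containing the constant function $1$. The data distribution $\mu\in\Delta(\mathcal S\times\mathcal A)$ is the discounted state-action occupancy of a behavior policy, also denoted $\mu$. Define $\mathcal L_\mu(\pi,f)=\mathbb E_{(s,a)\sim\mu}[f(s,\pi)-f(s,a)]$, $\mathcal E_\mu(\pi,f)=\max_{w\in\mathcal W}|\mathbb E_\mu[w(s,a)(f-\mathcal T_r^\pi f)(s,a)]|$, and $\hat{\mathcal E}_\mu(\pi,f)=\max_{w\in\mathcal W}|\mathbb E_\mu[w(s,a)(f-\mathcal T_c^\pi f)(s,a)]|$. *)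

(* Defs.v *)
From HB Require Import structures.
From mathcomp Require Import all_boot all_order all_algebra.
From mathcomp Require Import all_classical all_reals all_analysis.
Set Implicit Arguments. Unset Strict Implicit. Unset Printing Implicit Defensive.
Import Order.TTheory GRing.Theory Num.Theory.
Local Open Scope classical_set_scope.
Local Open Scope ring_scope.

(* The transition kernel P : S x A -> Delta(S) is given as one probability
   kernel per action: P a s is the distribution of s' given (s,a). *)
Section CMDP.
Context {d : measure_display} {S : measurableType d} {R : realType} {A : finType}.

Definition policy_valid (pi : S -> A -> R) : Prop :=
  (forall s a, 0 <= pi s a) /\ (forall s, \sum_(a : A) pi s a = 1) /\
  (forall a, measurable_fun setT (fun s => pi s a)).

Definition polavg (pi : S -> A -> R) (f : S -> A -> R) (s : S) : R :=
  \sum_(a : A) pi s a * f s a.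

Definition nextE (P : A -> R.-pker S ~> S) (pi : S -> A -> R)
  (f : S -> A -> R) : S -> A -> R :=
  fun s a => Rintegral (P a s) setT (polavg pi f).

Definition bellman (P : A -> R.-pker S ~> S) (gamma : R) (Rw : S -> A -> R)
  (pi : S -> A -> R) (f : S -> A -> R) : S -> A -> R :=
  fun s a => Rw s a + gamma * nextE P pi f s a.

(* Q^pi_Rw(s,a) = E[ sum_t gamma^t Rw(s_t,a_t) | s_0=s, a_0=a ]
   = sum_t gamma^t E[Rw(s_t,a_t) | s_0 = s, a_0 = a], where the conditional
   law of (s_t,a_t) is obtained by iterating the transition/policy kernel. *)
Definition Qfun (P : A -> R.-pker S ~> S) (gamma : R) (pi : S -> A -> R)
  (Rw : S -> A -> R) : S -> A -> R :=
  fun s a => limn (fun n => \sum_(0 <= t < n) gamma ^+ t * iter t (nextE P pi) Rw s a).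

Definition Vfun P gamma pi Rw : S -> R := polavg pi (Qfun P gamma pi Rw).

Definition Jval (P : A -> R.-pker S ~> S) (rho : probability S R) (gamma : R)
  (Rw : S -> A -> R) (pi : S -> A -> R) : R :=
  (1 - gamma) * Rintegral rho setT (Vfun P gamma pi Rw).

(* E_{(s,a) ~ d^pi}[g]  where d^pi is the discounted occupancy:
   (1-gamma) E[ sum_t gamma^t g(s_t,a_t) ], s_0 ~ rho, a_t ~ pi(.|s_t). *)
Definition occE (P : A -> R.-pker S ~> S) (rho : probability S R) (gamma : R)
  (pi : S -> A -> R) (g : S -> A -> R) : R :=
  (1 - gamma) * Rintegral rho setT (Vfun P gamma pi g).

Definition norm2occ P rho gamma (pi : S -> A -> R) (g : S -> A -> R) : R :=
  Num.sqrt (occE P rho gamma pi (fun s a => g s a ^+ 2)).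

Definition Lmu P rho gamma (mub pi f : S -> A -> R) : R :=
  occE P rho gamma mub (fun s a => polavg pi f s - f s a).

(* E_mu(pi, f) = max_{w in W} | E_mu[ w (f - T^pi f) ] | (for Rw = R);
   hat E_mu uses Rw = C.  The max is taken as a supremum. *)
Definition Emu P rho gamma (Rw : S -> A -> R) (W : set (S -> A -> R))
  (mub pi f : S -> A -> R) : R :=
  sup [set `| occE P rho gamma mub
              (fun s a => w s a * (f s a - bellman P gamma Rw pi f s a)) |
        | w in W].

End CMDP.

(* Main.v *)
Require Import Defs.
From HB Require Import structures.
From mathcomp Require Import all_boot all_order all_algebra.
From mathcomp Require Import all_classical all_reals all_analysis.
From mathcomp Require measurable_realfun ring lra.
Import Order.TTheory GRing.Theory Num.Theory.
Local Open Scope classical_set_scope.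
Local Open Scope ring_scope.


Module Dev.
Import measurable_realfun ring lra.
Import numFieldNormedType.Exports.
Local Set Implicit Arguments. Local Unset Strict Implicit.

Section DevS.
Context {d : measure_display} {S : measurableType d} {R : realType} {A : finType}.
Variables (P : A -> R.-pker S ~> S) (rho : probability S R) (gamma : R).
Hypothesis Hg : 0 <= gamma < 1.

Definition mfun (g : S -> A -> R) := forall a, measurable_fun setT (fun s => g s a).
Definition nice (g : S -> A -> R) := mfun g /\ exists M, forall s a, `|g s a| <= M.
Definition lin (c1 : R) g1 (c2 : R) g2 : S -> A -> R := fun s a => c1 * g1 s a + c2 * g2 s a.

Lemma nice_lin c1 g1 c2 g2 : nice g1 -> nice g2 -> nice (lin c1 g1 c2 g2).
Proof.
move=> [m1 [M1 b1]] [m2 [M2 b2]]; split.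
  move=> a; apply: measurable_funD; apply: measurable_funM => //; exact: measurable_cst.
exists (`|c1| * M1 + `|c2| * M2) => s a; rewrite /lin.
apply: (le_trans (ler_normD _ _)); rewrite !normrM.
by apply: lerD; apply: ler_wpM2l.
Qed.

Lemma integrable_bdd (m : {measure set S -> \bar R}) (h : S -> R) M :
  (m setT < +oo)%E -> measurable_fun setT h -> (forall s, `|h s| <= M) ->
  m.-integrable setT (EFin \o h).
Proof.
move=> fin mh bh; apply: measurable_bounded_integrable => //.
exists M; split; first exact: num_real.
by move=> x Mx y _; apply: (le_trans (bh y)); apply: ltW.
Qed.

Lemma Pk1 a s : P a s setT = 1%E.
Proof. exact: prob_kernel. Qed.

Lemma Pfin a s : ((P a s) setT < +oo)%E.
Proof. by rewrite prob_kernel ltry. Qed.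
Lemma Pone a s : fine ((P a s) setT) = 1.
Proof. by rewrite prob_kernel. Qed.
Lemma rhofin : (rho setT < +oo)%E.
Proof. by rewrite probability_setT ltry. Qed.

Lemma meas_kint a (h : S -> R) M : measurable_fun setT h -> (forall s, `|h s| <= M) ->
  measurable_fun setT (fun s => Rintegral (P a s) setT h).
Proof.
move=> mh bh.
have E s : Rintegral (P a s) setT h = fine (\int[P a s]_x (h x + M)%:E)%E - M.
  have := @RintegralD _ _ _ (P a s) setT h (fun=> M) measurableT
    (integrable_bdd (Pfin a s) mh bh)
    (@integrable_bdd (P a s) (fun=> M) `|M| (Pfin a s) (measurable_cst M) (fun=> lexx _)).
  rewrite Rintegral_cst // Pone mulr1 => H.
  by rewrite (_ : fine _ = Rintegral (P a s) setT (fun x => h x + M)) // H addrK.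
rewrite (_ : (fun s => _) = (fun s => fine (\int[P a s]_x (h x + M)%:E)%E - M)); last first.
  by apply/funext => s; rewrite E.
apply: measurable_funB; last exact: measurable_cst.
have k0 : forall z, (0 <= (h z + M)%:E)%E.
  move=> z; rewrite lee_fin -lerBlDr sub0r; have := bh z; rewrite ler_norml.
  by case/andP.
have mk : measurable_fun setT (fun z => (h z + M)%:E).
  apply/measurable_EFinP; apply: measurable_funD => //; exact: measurable_cst.
have mi := @measurable_fun_integral_kernel _ _ _ _ _ (P a) (measurable_kernel (P a)) _ k0 mk.
exact: (measurableT_comp (fine_measurable measurableT) mi).
Qed.



Section RI.
Variable m : {measure set S -> \bar R}.
Hypothesis m1 : m setT = 1%E.

Lemma mfin : (m setT < +oo)%E.
Proof. by rewrite m1 ltry. Qed.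

Lemma RI_cst (c : R) : Rintegral m setT (fun=> c) = c.
Proof. by rewrite Rintegral_cst // m1 mulr1. Qed.

Lemma RI_int (h : S -> R) (M : R) : measurable_fun setT h -> (forall s, `|h s| <= M) ->
  m.-integrable setT (EFin \o h).
Proof. exact: integrable_bdd mfin. Qed.

Lemma RI_bdd (h : S -> R) (M : R) : measurable_fun setT h -> (forall s, `|h s| <= M) ->
  `|Rintegral m setT h| <= M.
Proof.
move=> mh bh; have ih := RI_int mh bh.
have ic (c : R) : m.-integrable setT (EFin \o (fun=> c : R)).
  by apply: (@RI_int _ `|c|) => //; exact: measurable_cst.
rewrite ler_norml; apply/andP; split.
- rewrite -{1}(RI_cst (- M)); apply: le_Rintegral => // x _.
  by have := bh x; rewrite ler_norml => /andP[].
- rewrite -[X in _ <= X](RI_cst M); apply: le_Rintegral => // x _.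
  by have := bh x; rewrite ler_norml => /andP[].
Qed.

Lemma RI_le (h1 h2 : S -> R) (M1 M2 : R) : measurable_fun setT h1 -> (forall s, `|h1 s| <= M1) ->
  measurable_fun setT h2 -> (forall s, `|h2 s| <= M2) -> (forall s, h1 s <= h2 s) ->
  Rintegral m setT h1 <= Rintegral m setT h2.
Proof.
move=> m1' b1 m2 b2 le; apply: le_Rintegral => //; [exact: RI_int m1' b1|exact: RI_int m2 b2].
Qed.

Lemma RI_lin (c1 : R) (h1 : S -> R) (c2 : R) (h2 : S -> R) (M1 M2 : R) : measurable_fun setT h1 -> (forall s, `|h1 s| <= M1) ->
  measurable_fun setT h2 -> (forall s, `|h2 s| <= M2) ->
  Rintegral m setT (fun s => c1 * h1 s + c2 * h2 s) =
  c1 * Rintegral m setT h1 + c2 * Rintegral m setT h2.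
Proof.
move=> mh1 b1 mh2 b2.
have i1 := RI_int mh1 b1; have i2 := RI_int mh2 b2.
have mc1 : measurable_fun setT (fun s => c1 * h1 s).
  by apply: measurable_funM => //; exact: measurable_cst.
have mc2 : measurable_fun setT (fun s => c2 * h2 s).
  by apply: measurable_funM => //; exact: measurable_cst.
have j1 : m.-integrable setT (EFin \o (fun s => c1 * h1 s)).
  apply: (@RI_int _ (`|c1| * M1)) => // s; rewrite normrM; exact: ler_wpM2l.
have j2 : m.-integrable setT (EFin \o (fun s => c2 * h2 s)).
  apply: (@RI_int _ (`|c2| * M2)) => // s; rewrite normrM; exact: ler_wpM2l.
rewrite (RintegralD measurableT j1 j2).
by rewrite (RintegralZl _ measurableT i1) (RintegralZl _ measurableT i2).
Qed.

End RI.

Section Pol.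
Variable pi : S -> A -> R.
Hypothesis Hpi : policy_valid pi.

Lemma pol_meas g : mfun g -> measurable_fun setT (polavg pi g).
Proof.
move=> mg; case: Hpi => _ [_ mpi].
rewrite /polavg; apply: measurable_sum => a; apply: measurable_funM; [exact: mpi|exact: mg].
Qed.

Lemma pol_bdd g M : (forall s a, `|g s a| <= M) -> forall s, `|polavg pi g s| <= M.
Proof.
move=> b s; case: Hpi => p0 [p1 _]; rewrite /polavg.
apply: (le_trans (ler_norm_sum _ _ _)).
apply: (@le_trans _ _ (\sum_a pi s a * M)).
  apply: ler_sum => a _; rewrite normrM ger0_norm //; exact: ler_wpM2l.
by rewrite -mulr_suml p1 mul1r.
Qed.

Lemma pol_ge0 g : (forall s a, 0 <= g s a) -> forall s, 0 <= polavg pi g s.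
Proof.
move=> g0 s; case: Hpi => p0 _; apply: sumr_ge0 => a _; exact: mulr_ge0.
Qed.

Lemma pol_lin c1 g1 c2 g2 s : polavg pi (lin c1 g1 c2 g2) s = c1 * polavg pi g1 s + c2 * polavg pi g2 s.
Proof.
rewrite /polavg /lin !mulr_sumr -big_split /=; apply: eq_bigr => a _.
by rewrite mulrDr !mulrA (mulrC c1) (mulrC c2).
Qed.

Lemma pol_state (h : S -> R) s : polavg pi (fun s _ => h s) s = h s.
Proof. case: Hpi => _ [p1 _]; by rewrite /polavg -mulr_suml p1 mul1r. Qed.


Lemma nice_next g : nice g -> nice (Defs.nextE P pi g).
Proof.
move=> [mg [M b]]; split.
  by move=> a; apply: (meas_kint a (pol_meas mg) (pol_bdd b)).
exists M => s a; rewrite /Defs.nextE.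
exact: (RI_bdd (Pk1 a s) (pol_meas mg) (pol_bdd b)).
Qed.

Lemma next_bdd g M : mfun g -> (forall s a, `|g s a| <= M) -> forall s a, `|Defs.nextE P pi g s a| <= M.
Proof.
move=> mg b s a; exact: (RI_bdd (Pk1 a s) (pol_meas mg) (pol_bdd b)).
Qed.

Lemma next_lin c1 g1 c2 g2 : nice g1 -> nice g2 ->
  Defs.nextE P pi (lin c1 g1 c2 g2) = lin c1 (Defs.nextE P pi g1) c2 (Defs.nextE P pi g2).
Proof.
move=> [m1 [M1 b1]] [m2 [M2 b2]]; apply/funext => s; apply/funext => a.
rewrite /Defs.nextE /lin.
rewrite (_ : polavg pi (lin c1 g1 c2 g2) = fun s => c1 * polavg pi g1 s + c2 * polavg pi g2 s).
  exact: (RI_lin (Pk1 a s) c1 c2 (pol_meas m1) (pol_bdd b1) (pol_meas m2) (pol_bdd b2)).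
by apply/funext => x; rewrite pol_lin.
Qed.

Lemma next_ge0 g : nice g -> (forall s a, 0 <= g s a) -> forall s a, 0 <= Defs.nextE P pi g s a.
Proof. move=> _ g0 s a; apply: Rintegral_ge0 => x _; exact: pol_ge0. Qed.

Lemma next_one : Defs.nextE P pi (fun _ _ => 1) = (fun _ _ => 1).
Proof.
apply/funext => s; apply/funext => a; rewrite /Defs.nextE.
rewrite (_ : polavg pi _ = fun=> 1); first exact: RI_cst (Pk1 a s) 1.
by apply/funext => x; rewrite (pol_state (fun=> 1)).
Qed.


Definition it t g := iter t (Defs.nextE P pi) g.

Lemma nice_it t g : nice g -> nice (it t g).
Proof. move=> ng; elim: t => [|t IH] //=; exact: nice_next. Qed.

Lemma it_bdd t g M : nice g -> (forall s a, `|g s a| <= M) -> forall s a, `|it t g s a| <= M.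
Proof.
move=> ng b; elim: t => [|t IH] //= s a.
apply: next_bdd => //; by case: (nice_it t ng).
Qed.

Lemma it_lin t c1 g1 c2 g2 : nice g1 -> nice g2 ->
  it t (lin c1 g1 c2 g2) = lin c1 (it t g1) c2 (it t g2).
Proof.
move=> n1 n2; elim: t => [|t IH] //=.
rewrite /it /= -/(it t _) IH next_lin //; exact: nice_it.
Qed.

Lemma it_ge0 t g : nice g -> (forall s a, 0 <= g s a) -> forall s a, 0 <= it t g s a.
Proof.
move=> ng g0; elim: t => [|t IH] //= s a; apply: next_ge0 => //; exact: nice_it.
Qed.

Lemma it_one t : it t (fun _ _ => 1) = (fun _ _ => 1).
Proof. elim: t => [|t IH] //=; rewrite /it /= -/(it t _) IH; exact: next_one. Qed.

Lemma itS t g : it t (Defs.nextE P pi g) = it t.+1 g.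
Proof. by rewrite /it iterSr. Qed.

Definition useq g s a : R ^nat := fun t => gamma ^+ t * it t g s a.

Lemma Qfun_E g s a : Qfun P gamma pi g s a = limn (series (useq g s a)).
Proof. by []. Qed.

Lemma g0 : 0 <= gamma. Proof. by case/andP: Hg. Qed.
Lemma g1 : gamma < 1. Proof. by case/andP: Hg. Qed.

Lemma cvg_Q g s a : nice g -> cvgn (series (useq g s a)).
Proof.
move=> ng; have [_ [M b]] := ng.
apply: normed_cvg.
apply: (@series_le_cvg _ _ (geometric `|M| gamma)).
- move=> n /=; exact: normr_ge0.
- move=> n; apply: geometric_ge0 => //; exact: g0.
- move=> n /=; rewrite /useq normrM ger0_norm ?exprn_ge0 ?g0 // mulrC.
  apply: ler_wpM2r; first by rewrite exprn_ge0 // g0.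
  exact: le_trans (it_bdd n ng b s a) (ler_norm _).
- apply: is_cvg_geometric_series; rewrite ger0_norm ?g0 //; exact: g1.
Qed.


Lemma series_lin c1 g1 c2 g2 s a n : nice g1 -> nice g2 ->
  series (useq (lin c1 g1 c2 g2) s a) n =
  c1 * series (useq g1 s a) n + c2 * series (useq g2 s a) n.
Proof.
move=> n1 n2; rewrite /series /= !mulr_sumr -big_split /=; apply: eq_bigr => t _.
rewrite /useq it_lin // /lin; ring.
Qed.

Lemma Q_lin c1 g1 c2 g2 s a : nice g1 -> nice g2 ->
  Qfun P gamma pi (lin c1 g1 c2 g2) s a =
  c1 * Qfun P gamma pi g1 s a + c2 * Qfun P gamma pi g2 s a.
Proof.
move=> n1 n2; rewrite !Qfun_E.
rewrite (_ : series (useq (lin c1 g1 c2 g2) s a) =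
   fun n => c1 * series (useq g1 s a) n + c2 * series (useq g2 s a) n); last first.
  by apply/funext => n; rewrite series_lin.
apply: cvg_lim => //; apply: cvgD; apply: cvgMl_tmp; exact: cvg_Q.
Qed.

Lemma Q_shift g s a : nice g ->
  Qfun P gamma pi g s a = g s a + gamma * Qfun P gamma pi (Defs.nextE P pi g) s a.
Proof.
move=> ng; rewrite !Qfun_E.
have E n : series (useq g s a) n.+1 = g s a + gamma * series (useq (Defs.nextE P pi g) s a) n.
  rewrite /series /= big_nat_recl // /useq expr0 mul1r /=; congr (_ + _).
  rewrite mulr_sumr; apply: eq_bigr => t _; rewrite itS exprS -mulrA; congr (_ * _).
have h : (fun n => series (useq g s a) n.+1) @ \oo -->
   g s a + gamma * limn (series (useq (Defs.nextE P pi g) s a)).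
  rewrite (_ : (fun n => _) = fun n => g s a + gamma * series (useq (Defs.nextE P pi g) s a) n).
    apply: cvgD; first exact: cvg_cst.
    by apply: cvgMl_tmp; apply: cvg_Q; exact: nice_next.
  by apply/funext => n; rewrite E.
move: h; rewrite (cvg_shiftS (series (useq g s a))) => h.
exact: cvg_lim.
Qed.

Lemma Q_ge0 g s a : nice g -> (forall s a, 0 <= g s a) -> 0 <= Qfun P gamma pi g s a.
Proof.
move=> ng gp; rewrite Qfun_E; apply: limr_ge; first exact: cvg_Q.
apply: nearW => n; rewrite /series /=; apply: sumr_ge0 => t _.
by apply: mulr_ge0; [rewrite exprn_ge0 // g0|exact: it_ge0].
Qed.

Lemma Q_bdd g M s a : nice g -> (forall s a, `|g s a| <= M) ->
  `|Qfun P gamma pi g s a| <= `|M| / (1 - gamma).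
Proof.
move=> ng b; rewrite Qfun_E.
have hb n : `|series (useq g s a) n| <= `|M| / (1 - gamma).
  rewrite /series /=; apply: (le_trans (ler_norm_sum _ _ _)).
  apply: (@le_trans _ _ (series (geometric `|M| gamma) n)).
    rewrite /series /=; apply: ler_sum => t _; rewrite /useq normrM ger0_norm ?exprn_ge0 ?g0 //.
    rewrite /geometric mulrC; apply: ler_wpM2r; first by rewrite exprn_ge0 // g0.
    exact: le_trans (it_bdd t ng b s a) (ler_norm _).
  rewrite geometric_seriesE ?lt_eqF ?g1 //= ler_pM2r ?invr_gt0 ?subr_gt0 ?g1 //.
  by rewrite -[X in _ <= X]mulr1 ler_wpM2l // lerBlDr lerDl exprn_ge0 // g0.
rewrite ler_norml; apply/andP; split.
- apply: limr_ge; first exact: cvg_Q.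
  by apply: nearW => n; have := hb n; rewrite ler_norml => /andP[].
- apply: limr_le; first exact: cvg_Q.
  by apply: nearW => n; have := hb n; rewrite ler_norml => /andP[].
Qed.

Lemma Q_meas g : nice g -> mfun (Qfun P gamma pi g).
Proof.
move=> ng a.
apply: (@measurable_fun_cvg _ _ _ _ (fun n s => series (useq g s a) n)).
  move=> n; rewrite /series /=; apply: measurable_sum => t.
  apply: measurable_funM; first exact: measurable_cst.
  by case: (nice_it t ng) => m _; exact: m.
move=> s _; exact: cvg_Q.
Qed.

Lemma nice_Q g : nice g -> nice (Qfun P gamma pi g).
Proof.
move=> ng; split; first exact: Q_meas.
have [_ [M b]] := ng; exists (`|M| / (1 - gamma)) => s a; exact: Q_bdd.
Qed.

Lemma Q_one s a : Qfun P gamma pi (fun _ _ => 1) s a = (1 - gamma)^-1.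
Proof.
have n1 : nice (fun _ _ => 1 : R).
  split; first by move=> a'; exact: measurable_cst.
  by exists 1 => _ _; rewrite normr1.
have := Q_shift s a n1; rewrite next_one => h.
have ne : 1 - gamma != 0 by rewrite subr_eq0 eq_sym lt_eqF // g1.
apply: (mulIf ne); rewrite mulVf //.
by rewrite mulrBr mulr1 {1}h; ring.
Qed.

End Pol.


Lemma rho1 : rho setT = 1%E.
Proof. exact: probability_setT. Qed.

Section Occ.
Variable pi : S -> A -> R.
Hypothesis Hpi : policy_valid pi.

Lemma V_meas g : nice g -> measurable_fun setT (Vfun P gamma pi g).
Proof. move=> ng; apply: pol_meas => //; exact: Q_meas. Qed.

Lemma V_bdd g : nice g -> exists M, forall s, `|Vfun P gamma pi g s| <= M.
Proof.
move=> ng; have [_ [M b]] := nice_Q Hpi ng; exists M; exact: pol_bdd.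
Qed.

Lemma occ_lin c1 g1 c2 g2 : nice g1 -> nice g2 ->
  occE P rho gamma pi (lin c1 g1 c2 g2) =
  c1 * occE P rho gamma pi g1 + c2 * occE P rho gamma pi g2.
Proof.
move=> n1 n2; rewrite /occE.
have [M1 b1] := V_bdd n1; have [M2 b2] := V_bdd n2.
rewrite (_ : Vfun P gamma pi (lin c1 g1 c2 g2) =
  fun s => c1 * Vfun P gamma pi g1 s + c2 * Vfun P gamma pi g2 s); last first.
  apply/funext => s; rewrite /Vfun -pol_lin //; congr polavg.
  by apply/funext => s'; apply/funext => a; rewrite Q_lin.
rewrite (RI_lin rho1 c1 c2 (V_meas n1) b1 (V_meas n2) b2); ring.
Qed.

Lemma occ_shift g : nice g ->
  occE P rho gamma pi g = (1 - gamma) * Rintegral rho setT (polavg pi g)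
     + gamma * occE P rho gamma pi (Defs.nextE P pi g).
Proof.
move=> ng; rewrite /occE.
have ng' := nice_next Hpi ng.
have [M2 b2] := V_bdd ng'.
have [mg [M1 b1]] := ng.
rewrite (_ : Vfun P gamma pi g =
  fun s => 1 * polavg pi g s + gamma * Vfun P gamma pi (Defs.nextE P pi g) s); last first.
  apply/funext => s; rewrite /Vfun -(pol_lin pi 1 g gamma) //; congr polavg.
  by apply/funext => s'; apply/funext => a; rewrite (Q_shift Hpi) // /lin mul1r.
rewrite (RI_lin rho1 1 gamma (pol_meas Hpi mg) (pol_bdd Hpi b1) (V_meas ng') b2); ring.
Qed.

Lemma occ_ge0 g : nice g -> (forall s a, 0 <= g s a) -> 0 <= occE P rho gamma pi g.
Proof.
move=> ng gp; rewrite /occE; apply: mulr_ge0; first by rewrite subr_ge0 ltW // g1.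
apply: Rintegral_ge0 => s _; apply: pol_ge0 => // s' a; exact: Q_ge0.
Qed.

Lemma occ_one : occE P rho gamma pi (fun _ _ => 1) = 1.
Proof.
rewrite /occE /Vfun.
rewrite (_ : polavg pi _ = fun=> (1 - gamma)^-1); last first.
  apply/funext => s; rewrite (_ : Qfun _ _ _ _ = fun _ _ => (1 - gamma)^-1).
    exact: (pol_state Hpi (fun=> (1 - gamma)^-1)).
  by apply/funext => s'; apply/funext => a; rewrite Q_one.
rewrite (RI_cst rho1) mulfV // subr_eq0 eq_sym lt_eqF //; exact: g1.
Qed.

End Occ.


Lemma nice_mul g1 g2 : nice g1 -> nice g2 -> nice (fun s a => g1 s a * g2 s a).
Proof.
move=> [m1 [M1 b1]] [m2 [M2 b2]]; split.
  move=> a; exact: measurable_funM.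
exists (M1 * M2) => s a; rewrite normrM; apply: ler_pM => //.
Qed.

Lemma nice_sq g : nice g -> nice (fun s a => g s a ^+ 2).
Proof. move=> ng; have := nice_mul ng ng; by under eq_fun do under eq_fun do rewrite -expr2. Qed.

Lemma nice_one : nice (fun _ _ => 1 : R).
Proof. split; first by move=> a; exact: measurable_cst. by exists 1 => _ _; rewrite normr1. Qed.

Lemma nice_state pi f : policy_valid pi -> nice f -> nice (fun s (_ : A) => polavg pi f s).
Proof.
move=> Hpi [mf [M b]]; split; first by move=> a; exact: pol_meas.
by exists M => s _; exact: pol_bdd.
Qed.

Lemma next_state mu pi f : policy_valid mu ->
  Defs.nextE P mu (fun s (_ : A) => polavg pi f s) = Defs.nextE P pi f.
Proof.
move=> Hmu; apply/funext => s; apply/funext => a; rewrite /Defs.nextE; congr Rintegral.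
by apply/funext => x; rewrite (pol_state Hmu (polavg pi f)).
Qed.

Lemma occ_state pi f : policy_valid pi -> nice f ->
  occE P rho gamma pi (fun s _ => polavg pi f s) = occE P rho gamma pi f.
Proof.
move=> Hpi nf; rewrite occ_shift //; last exact: nice_state.
rewrite next_state // [RHS]occ_shift //; congr (_ * _ + _).
by congr Rintegral; apply/funext => s; rewrite (pol_state Hpi (polavg pi f)).
Qed.

Lemma Lself pi f : policy_valid pi -> nice f -> Lmu P rho gamma pi pi f = 0.
Proof.
move=> Hpi nf; rewrite /Lmu.
rewrite (_ : (fun s a => _) = lin 1 (fun s _ => polavg pi f s) (-1) f); last first.
  by apply/funext => s; apply/funext => a; rewrite /lin; ring.
rewrite occ_lin //; last exact: nice_state.
rewrite occ_state //; ring.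
Qed.

Lemma err_eq Rw pi f : bellman P gamma Rw pi f =
  lin 1 Rw gamma (Defs.nextE P pi f).
Proof. by apply/funext => s; apply/funext => a; rewrite /lin /bellman !mul1r. Qed.

Lemma nice_err Rw pi f : policy_valid pi -> nice Rw -> nice f ->
  nice (fun s a => f s a - bellman P gamma Rw pi f s a).
Proof.
move=> Hpi nR nf; rewrite err_eq.
rewrite (_ : (fun s a => _) = lin 1 f (-1) (lin 1 Rw gamma (Defs.nextE P pi f))).
  apply: nice_lin => //; apply: nice_lin => //; exact: nice_next.
by apply/funext => s; apply/funext => a; rewrite /lin; ring.
Qed.

Lemma ID mu pi f Rw : policy_valid mu -> policy_valid pi -> nice f -> nice Rw ->
  Lmu P rho gamma mu pi f = (1 - gamma) * Rintegral rho setT (polavg pi f)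
    - occE P rho gamma mu Rw
    - occE P rho gamma mu (fun s a => f s a - bellman P gamma Rw pi f s a).
Proof.
move=> Hmu Hpi nf nR; rewrite /Lmu.
have nh := nice_state Hpi nf.
rewrite (_ : (fun s a => _) = lin 1 (fun s _ => polavg pi f s) (-1) f); last first.
  by apply/funext => s; apply/funext => a; rewrite /lin; ring.
rewrite occ_lin // (occ_shift Hmu nh) next_state //.
rewrite (_ : polavg mu _ = polavg pi f); last first.
  by apply/funext => s; rewrite (pol_state Hmu (polavg pi f)).
rewrite err_eq.
rewrite (_ : (fun s a => _) = lin 1 f (-1) (lin 1 Rw gamma (Defs.nextE P pi f))); last first.
  by apply/funext => s; apply/funext => a; rewrite /lin; ring.
have nn := nice_next Hpi nf.
rewrite occ_lin //; last exact: nice_lin.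
rewrite occ_lin //; ring.
Qed.

Lemma occ_le pi g1 g2 : policy_valid pi -> nice g1 -> nice g2 -> (forall s a, g1 s a <= g2 s a) ->
  occE P rho gamma pi g1 <= occE P rho gamma pi g2.
Proof.
move=> Hpi n1 n2 le.
have h : 0 <= occE P rho gamma pi (lin 1 g2 (-1) g1).
  apply: occ_ge0 => //; first exact: nice_lin.
  by move=> s a; rewrite /lin mul1r mulN1r subr_ge0.
by move: h; rewrite occ_lin // mul1r mulN1r subr_ge0.
Qed.

Lemma CS pi e : policy_valid pi -> nice e ->
  occE P rho gamma pi (fun s a => e s a ^+ 2) <= 0 -> occE P rho gamma pi e = 0.
Proof.
move=> Hpi ne h.
set E := occE P rho gamma pi e.
have ne2 := nice_sq ne.
have hg : occE P rho gamma pi (lin 1 (fun s a => e s a ^+ 2) 1 (lin (-2 * E) e (E ^+ 2) (fun _ _ => 1))) >= 0.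
  apply: occ_ge0 => //; first by apply: nice_lin => //; apply: nice_lin => //; exact: nice_one.
  move=> s a; rewrite /lin.
  rewrite (_ : _ + _ = (e s a - E) ^+ 2); first exact: sqr_ge0.
  ring.
have n3 := nice_lin (-2 * E) (E ^+ 2) ne nice_one.
move: hg; rewrite (occ_lin Hpi _ _ ne2 n3) (occ_lin Hpi _ _ ne nice_one).
rewrite (occ_one Hpi) -/E => hg.
have : E ^+ 2 <= 0.
  apply: (le_trans _ h); rewrite -subr_ge0; apply: (le_trans hg); rewrite le_eqVlt; apply/orP; left; apply/eqP; ring.
rewrite le_eqVlt ltNge sqr_ge0 orbF sqrf_eq0 => /eqP //.
Qed.

Lemma sqrt_le0 (x : R) : Num.sqrt x ^+ 2 <= 0 -> x <= 0.
Proof.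
case: (lerP x 0) => // x0; rewrite sqr_sqrtr; last exact: ltW. move=> h; move: x0; by rewrite ltNge h.
Qed.


Lemma Emu_ge0 Rw W mu pi f : W (fun _ _ => 1) -> 0 <= Emu P rho gamma Rw W mu pi f.
Proof.
move=> W1; rewrite /Emu.
set E := [set _ | _ in _].
case: (pselect (has_sup E)) => hs; last by rewrite sup_out.
have H1 : E (`|occE P rho gamma mu (fun s a => 1 * (f s a - bellman P gamma Rw pi f s a))|).
  by exists (fun _ _ => 1).
exact: le_trans (normr_ge0 _) (sup_upper_bound hs H1).
Qed.

Lemma Emu_zero Rw (W : set (S -> A -> R)) Bw mu pi f : policy_valid mu -> policy_valid pi ->
  nice Rw -> nice f ->
  (forall w, W w -> (forall s a, 0 <= w s a <= Bw) /\ forall a, measurable_fun setT (fun s => w s a)) ->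
  W (fun _ _ => 1) ->
  occE P rho gamma mu (fun s a => (f s a - bellman P gamma Rw pi f s a) ^+ 2) <= 0 ->
  Emu P rho gamma Rw W mu pi f = 0.
Proof.
move=> Hmu Hpi nR nf HW W1 h.
have ne := nice_err Hpi nR nf.
set e := (fun s a => _) in ne h.
have ne2 := nice_sq ne.
have z w : W w -> occE P rho gamma mu (fun s a => w s a * e s a) = 0.
  move=> Ww; have [bw mw] := HW w Ww.
  have nw : nice w.
    split => //; exists Bw => s a; have := bw s a; case/andP => w0 wB.
    by rewrite ger0_norm.
  have nwe := nice_mul nw ne.
  apply: CS => //.
  apply: (@le_trans _ _ (occE P rho gamma mu (lin (Bw ^+ 2) (fun s a => e s a ^+ 2) 0 e))).
    apply: occ_le => //; first exact: nice_sq.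
      exact: nice_lin.
    move=> s a; rewrite /lin mul0r addr0 exprMn; apply: ler_wpM2r; first exact: sqr_ge0.
    have := bw s a; case/andP => w0 wB; rewrite ler_sqr //; exact: le_trans w0 wB.
  by rewrite occ_lin // mul0r addr0; apply: mulr_ge0_le0 => //; exact: sqr_ge0.
rewrite /Emu (_ : [set _ | _ in _] = [set 0]); first exact: sup1.
apply/seteqP; split => x /=.
  by case=> w Ww <-; rewrite z // normr0.
by move=> ->; exists (fun _ _ => 1) => //; rewrite z // normr0.
Qed.


End DevS.

Local Unset Implicit Arguments.

Lemma arith {R : realFieldType} {X Lc Lfs Lgs L0 M0 Mc E1 E2 Efs Egs Jrp Jrm Jcp Jcm beta lambda : R} :
  X + beta * E1 <= Lfs + beta * Efs ->
  - lambda * Lc + beta * E2 <= - lambda * Lgs + beta * Egs ->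
  L0 - lambda * M0 <= X - lambda * Mc ->
  L0 = 0 -> lambda * M0 = 0 ->
  Lfs = Jrp - Jrm -> Lgs = Jcp - Jcm ->
  beta * Efs = 0 -> beta * Egs = 0 ->
  0 <= beta * E1 -> 0 <= beta * E2 ->
  lambda * Lc <= lambda * Mc -> 0 <= lambda * Mc ->
  Jrp <= 1 -> 0 <= Jrm -> 0 < lambda ->
  Jrm <= Jrp /\ Num.max Jcp 0 <= Num.max Jcm 0 + lambda^-1.
Proof.
move=> hr hc hm l1 l2 LJr LJc hEfs hEgs bE1 bE2 m1 m2 Jr1 Jr0 hl.
rewrite LJc in hc; rewrite LJr in hr; rewrite l1 l2 in hm.
split; first lra.
have key : lambda * (Jcp - Jcm) <= lambda * lambda^-1.
  rewrite mulfV ?gt_eqF //; lra.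
rewrite ler_pM2l // in key.
have il : 0 <= lambda^-1 by rewrite invr_ge0 ltW.
have c1 : Jcm <= Num.max Jcm 0 by rewrite le_max lexx.
have c2 : 0 <= Num.max Jcm 0 by rewrite le_max lexx orbT.
rewrite ge_max; apply/andP; split; lra.
Qed.

Section T.
Context {d : measure_display} {S : measurableType d} {R : realType} {A : finType}.
Variables (P : A -> R.-pker S ~> S) (rho : probability S R) (gamma : R).
Hypothesis Hg : 0 <= gamma < 1.
Lemma LJlem mu pi f Rw : policy_valid mu -> policy_valid pi -> nice f -> nice Rw ->
  occE P rho gamma mu (fun s a => f s a - bellman P gamma Rw pi f s a) = 0 ->
  occE P rho gamma pi (fun s a => f s a - bellman P gamma Rw pi f s a) = 0 ->
  Lmu P rho gamma mu pi f = occE P rho gamma pi Rw - occE P rho gamma mu Rw.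
Proof.
move=> Hmu Hpi nf nR z1 z2.
have h1 := ID P rho Hg Hmu Hpi nf nR.
have h2 := ID P rho Hg Hpi Hpi nf nR.
have l := Lself P rho Hg Hpi nf.
move: h1 h2 l z1 z2.
move: (Lmu P rho gamma mu pi f) (Lmu P rho gamma pi pi f) ((1-gamma) * Rintegral rho setT (polavg pi f)).
move: (occE P rho gamma pi Rw) (occE P rho gamma mu Rw).
move: (occE P rho gamma mu (fun s a => f s a - bellman P gamma Rw pi f s a)).
move: (occE P rho gamma pi (fun s a => f s a - bellman P gamma Rw pi f s a)).
move=> x y a b c d0 e h1 h2 l z1 z2.
lra.
Qed.
Lemma main2
  (Rw Cw : S -> A -> R)
  (Pi F G W : set (S -> A -> R)) (Bw : R)
  (mub : S -> A -> R) (beta lambda : R)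
  (fr fc : (S -> A -> R) -> (S -> A -> R)) (pihat : S -> A -> R)
  (HRw : forall s a, 0 <= Rw s a <= 1)
  (HCw : forall s a, -1 <= Cw s a <= 1)
  (HRm : forall a, measurable_fun setT (fun s => Rw s a))
  (HCm : forall a, measurable_fun setT (fun s => Cw s a))
  (HPi : forall pi, Pi pi -> policy_valid pi)
  (HF : forall f, F f -> (forall s a, 0 <= f s a <= (1 - gamma)^-1) /\
                         forall a, measurable_fun setT (fun s => f s a))
  (HG : forall g, G g -> (forall s a, - (1 - gamma)^-1 <= g s a <= (1 - gamma)^-1) /\
                         forall a, measurable_fun setT (fun s => g s a))
  (HW : forall w, W w -> (forall s a, 0 <= w s a <= Bw) /\
                         forall a, measurable_fun setT (fun s => w s a))
  (HW1 : W (fun _ _ => 1))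
  (Hreal_r : forall pi, Pi pi -> exists f, F f /\ forall pi', Pi pi' ->
      norm2occ P rho gamma pi' (fun s a => f s a - bellman P gamma Rw pi f s a) ^+ 2 <= 0)
  (Hreal_c : forall pi, Pi pi -> exists g, G g /\ forall pi', Pi pi' ->
      norm2occ P rho gamma pi' (fun s a => g s a - bellman P gamma Cw pi g s a) ^+ 2 <= 0)
  (Hmu : Pi mub)
  (Hbeta : 0 <= beta) (Hlambda : 0 < lambda)
  (Hfr : forall pi, Pi pi -> F (fr pi) /\ forall f, F f ->
      Lmu P rho gamma mub pi (fr pi) + beta * Emu P rho gamma Rw W mub pi (fr pi)
      <= Lmu P rho gamma mub pi f + beta * Emu P rho gamma Rw W mub pi f)
  (Hfc : forall pi, Pi pi -> G (fc pi) /\ forall g, G g ->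
      - lambda * Lmu P rho gamma mub pi (fc pi) + beta * Emu P rho gamma Cw W mub pi (fc pi)
      <= - lambda * Lmu P rho gamma mub pi g + beta * Emu P rho gamma Cw W mub pi g)
  (Hpihat : Pi pihat /\ forall pi, Pi pi ->
      Lmu P rho gamma mub pi (fr pi) - lambda * Num.max (Lmu P rho gamma mub pi (fc pi)) 0
      <= Lmu P rho gamma mub pihat (fr pihat)
         - lambda * Num.max (Lmu P rho gamma mub pihat (fc pihat)) 0) :
  Jval P rho gamma Rw mub <= Jval P rho gamma Rw pihat /\
  Num.max (Jval P rho gamma Cw pihat) 0
    <= Num.max (Jval P rho gamma Cw mub) 0 + lambda^-1.
Proof.
have ig0 : 0 <= (1 - gamma)^-1.
  by rewrite invr_ge0 subr_ge0 ltW //; case/andP: Hg.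
have niceF f : F f -> nice f.
  move=> Ff; have [b m] := HF f Ff; split => //; exists (1 - gamma)^-1 => s a.
  have := b s a; case/andP => h1 h2; rewrite ler_norml h2 andbT.
  by apply: le_trans h1; rewrite lerNl oppr0.
have niceG g : G g -> nice g.
  by move=> Gg; have [b m] := HG g Gg; split => //; exists (1 - gamma)^-1 => s a; rewrite ler_norml.
have nR : nice Rw.
  split => //; exists 1 => s a; have := HRw s a; case/andP => h1 h2; rewrite ler_norml h2 andbT.
  by apply: le_trans h1; rewrite lerNl oppr0.
have nC : nice Cw by split => //; exists 1 => s a; rewrite ler_norml.
have Vmu := HPi _ Hmu.
have [Hph Hmax] := Hpihat.
have Vp := HPi _ Hph.
have ezero pi' Rw0 pi0 f0 : Pi pi' -> Pi pi0 -> nice Rw0 -> nice f0 ->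
    norm2occ P rho gamma pi' (fun s a => f0 s a - bellman P gamma Rw0 pi0 f0 s a) ^+ 2 <= 0 ->
    occE P rho gamma pi' (fun s a => f0 s a - bellman P gamma Rw0 pi0 f0 s a) = 0.
  move=> H1 H2 n1 n2 hn; apply: (CS Hg (HPi _ H1)).
  - have HH := nice_err P gamma (HPi _ H2) n1 n2. exact: HH.
  - exact: sqrt_le0.
have [fs [Ffs Hfs]] := Hreal_r pihat Hph.
have [gs [Ggs Hgs]] := Hreal_c pihat Hph.
have nfs := niceF _ Ffs; have ngs := niceG _ Ggs.
have LJr := LJlem mub pihat fs Rw Vmu Vp nfs nR (ezero _ _ _ _ Hmu Hph nR nfs (Hfs _ Hmu)) (ezero _ _ _ _ Hph Hph nR nfs (Hfs _ Hph)).
have LJc := LJlem mub pihat gs Cw Vmu Vp ngs nC (ezero _ _ _ _ Hmu Hph nC ngs (Hgs _ Hmu)) (ezero _ _ _ _ Hph Hph nC ngs (Hgs _ Hph)).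
have Efs : beta * Emu P rho gamma Rw W mub pihat fs = 0.
  rewrite (Emu_zero Hg Vmu Vp nR nfs HW HW1) ?mulr0 //; apply: sqrt_le0; exact: Hfs.
have Egs : beta * Emu P rho gamma Cw W mub pihat gs = 0.
  rewrite (Emu_zero Hg Vmu Vp nC ngs HW HW1) ?mulr0 //; apply: sqrt_le0; exact: Hgs.
have [Ffr Hfr'] := Hfr _ Hph.
have [Gfc Hfc'] := Hfc _ Hph.
have [Ffrm _] := Hfr _ Hmu.
have [Gfcm _] := Hfc _ Hmu.
have hm := Hmax _ Hmu.
have l1 := Lself P rho Hg Vmu (niceF _ Ffrm).
have l2 : lambda * Num.max (Lmu P rho gamma mub mub (fc mub)) 0 = 0.
  by rewrite (Lself P rho Hg Vmu (niceG _ Gfcm)) maxxx mulr0.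
have hr := Hfr' _ Ffs.
have hc := Hfc' _ Ggs.
have bE1 := mulr_ge0 Hbeta (Emu_ge0 P rho gamma Rw mub pihat (fr pihat) HW1).
have bE2 := mulr_ge0 Hbeta (Emu_ge0 P rho gamma Cw mub pihat (fc pihat) HW1).
have m1 : lambda * Lmu P rho gamma mub pihat (fc pihat) <= lambda * Num.max (Lmu P rho gamma mub pihat (fc pihat)) 0.
  by apply: ler_wpM2l; [exact: ltW | rewrite le_max lexx].
have m2 : 0 <= lambda * Num.max (Lmu P rho gamma mub pihat (fc pihat)) 0.
  by apply: mulr_ge0; [exact: ltW | rewrite le_max lexx orbT].
have Jr1 : occE P rho gamma pihat Rw <= 1.
  rewrite -(occ_one P rho Hg Vp).
  apply: (occ_le P rho Hg Vp nR nice_one).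
  by move=> s a; have := HRw s a; case/andP.
have Jr0 : 0 <= occE P rho gamma mub Rw.
  apply: (occ_ge0 P rho Hg Vmu nR) => s a.
  by have := HRw s a; case/andP.
change (occE P rho gamma mub Rw <= occE P rho gamma pihat Rw /\
  Num.max (occE P rho gamma pihat Cw) 0 <= Num.max (occE P rho gamma mub Cw) 0 + lambda^-1).
exact: (arith hr hc hm l1 l2 LJr LJc Efs Egs bE1 bE2 m1 m2 Jr1 Jr0 Hlambda).
Qed.
End T.

End Dev.

Theorem theorem1
  (d : measure_display) (S : measurableType d) (R : realType) (A : finType)
  (P : A -> R.-pker S ~> S) (rho : probability S R) (gamma : R)
  (Rw Cw : S -> A -> R)
  (Pi F G W : set (S -> A -> R)) (Bw : R)
  (mub : S -> A -> R) (beta lambda : R)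
  (fr fc : (S -> A -> R) -> (S -> A -> R)) (pihat : S -> A -> R)
  (* discount factor *)
  (Hgamma : 0 <= gamma < 1)
  (* reward in [0,1], cost in [-1,1], both measurable *)
  (HRw : forall s a, 0 <= Rw s a <= 1)
  (HCw : forall s a, -1 <= Cw s a <= 1)
  (HRm : forall a, measurable_fun setT (fun s => Rw s a))
  (HCm : forall a, measurable_fun setT (fun s => Cw s a))
  (* the classes *)
  (HPi : forall pi, Pi pi -> policy_valid pi)
  (HF : forall f, F f -> (forall s a, 0 <= f s a <= (1 - gamma)^-1) /\
                         forall a, measurable_fun setT (fun s => f s a))
  (HG : forall g, G g -> (forall s a, - (1 - gamma)^-1 <= g s a <= (1 - gamma)^-1) /\
                         forall a, measurable_fun setT (fun s => g s a))
  (HW : forall w, W w -> (forall s a, 0 <= w s a <= Bw) /\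
                         forall a, measurable_fun setT (fun s => w s a))
  (HW1 : W (fun _ _ => 1))
  (* approximate realizability with eps_1 = 0 *)
  (Hreal_r : forall pi, Pi pi -> exists f, F f /\ forall pi', Pi pi' ->
      norm2occ P rho gamma pi' (fun s a => f s a - bellman P gamma Rw pi f s a) ^+ 2 <= 0)
  (Hreal_c : forall pi, Pi pi -> exists g, G g /\ forall pi', Pi pi' ->
      norm2occ P rho gamma pi' (fun s a => g s a - bellman P gamma Cw pi g s a) ^+ 2 <= 0)
  (* behavior policy in the class *)
  (Hmu : Pi mub)
  (Hbeta : 0 <= beta) (Hlambda : 0 < lambda)
  (* f_r^pi in argmin_{f in F} L_mu(pi,f) + beta E_mu(pi,f) *)
  (Hfr : forall pi, Pi pi -> F (fr pi) /\ forall f, F f ->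
      Lmu P rho gamma mub pi (fr pi) + beta * Emu P rho gamma Rw W mub pi (fr pi)
      <= Lmu P rho gamma mub pi f + beta * Emu P rho gamma Rw W mub pi f)
  (* f_c^pi in argmin_{g in G} - lambda L_mu(pi,g) + beta hatE_mu(pi,g) *)
  (Hfc : forall pi, Pi pi -> G (fc pi) /\ forall g, G g ->
      - lambda * Lmu P rho gamma mub pi (fc pi) + beta * Emu P rho gamma Cw W mub pi (fc pi)
      <= - lambda * Lmu P rho gamma mub pi g + beta * Emu P rho gamma Cw W mub pi g)
  (* pihat in argmax_{pi in Pi} L_mu(pi, f_r^pi) - lambda {L_mu(pi, f_c^pi)}_+ *)
  (Hpihat : Pi pihat /\ forall pi, Pi pi ->
      Lmu P rho gamma mub pi (fr pi) - lambda * Num.max (Lmu P rho gamma mub pi (fc pi)) 0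
      <= Lmu P rho gamma mub pihat (fr pihat)
         - lambda * Num.max (Lmu P rho gamma mub pihat (fc pihat)) 0) :
  Jval P rho gamma Rw mub <= Jval P rho gamma Rw pihat /\
  Num.max (Jval P rho gamma Cw pihat) 0
    <= Num.max (Jval P rho gamma Cw mub) 0 + lambda^-1.
Proof.
exact: (@Dev.main2 d S R A P rho gamma Hgamma Rw Cw Pi F G W Bw mub beta lambda fr fc pihat
  HRw HCw HRm HCm HPi HF HG HW HW1 Hreal_r Hreal_c Hmu Hbeta Hlambda Hfr Hfc Hpihat).
Qed.
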